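(* Let $\pi\in S_n$. For every $k\in\{1,\dots,n\}$, $(c_k,d_k)\in\beta_\pi$ if and only if $k$ is the largest element of the $\pi$-segment containing $k$.
   Context: $G$ is the direct product of chains $0=c_0\prec\dots\prec c_n$ and $0=d_0\prec\dots\prec d_n$, elements written $c_i\vee d_j$. For $\pi\in S_n$, $\beta_\pi$ is the join, in the lattice of join-congruences (equivalences compatible with $\vee$) of $(G;\vee)$, of the smallest join-congruences collapsing $\{c_{i-1}\vee d_{\pi(i)},c_i\vee d_{\pi(i)-1},c_i\vee d_{\pi(i)}\}$, $i=1,\dots,n$. For $\sigma\in S_n$, a set $I$ is closed if $\sigma(I)\subseteq I$; a nonempty interval $\{u,\dots,v\}$ of $\{1<\dots<n\}$ is a $\sigma$-section if it, $\{1,\dots,u-1\}$ and $\{v+1,\dots,n\}$ are closed; minimal $\sigma$-sections are $\sigma$-segments, and they partition $\{1,\dots,n\}$. *)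

(* Defs.v *)
From mathcomp Require Import all_boot all_order all_fingroup.
Set Implicit Arguments. Unset Strict Implicit. Unset Printing Implicit Defensive.

(* The grid G = chain {c_0<..<c_n} x chain {d_0<..<d_n}.
   The element c_i \/ d_j is encoded as the pair (i, j). *)
Definition grid (n : nat) : finType := ('I_n.+1 * 'I_n.+1)%type.

Definition omax m (a b : 'I_m) : 'I_m := if (a <= b)%N then b else a.

Definition gjoin n (x y : grid n) : grid n := (omax x.1 y.1, omax x.2 y.2).

Definition cd n (i j : nat) : grid n := (inord i, inord j).

Definition join_congruence n (R : grid n -> grid n -> Prop) : Prop :=
  [/\ (forall x, R x x), (forall x y, R x y -> R y x),
      (forall x y z, R x y -> R y z -> R x z) &
      (forall x y z, R x y -> R (gjoin x z) (gjoin y z))].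

(* Permutation pi of {1..n} is represented by p : {perm 'I_n}, with
   pi(j+1) = (p j) + 1.  The i-th generating triple (i = j+1) is
   { c_{i-1} \/ d_{pi i}, c_i \/ d_{pi i - 1}, c_i \/ d_{pi i} }. *)
Definition triple n (p : {perm 'I_n}) (j : 'I_n) : seq (grid n) :=
  [:: cd n j (p j).+1; cd n j.+1 (p j); cd n j.+1 (p j).+1].

(* beta_pi: the join (in the lattice of join-congruences) of the smallest
   join-congruences collapsing each triple = the smallest join-congruence
   collapsing all the triples. *)
Definition beta n (p : {perm 'I_n}) (x y : grid n) : Prop :=
  forall R : grid n -> grid n -> Prop, join_congruence R ->
    (forall j a b, a \in triple p j -> b \in triple p j -> R a b) -> R x y.

(* Index sets are subsets of {1..n}; element i is encoded by ordinal i-1. *)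
Definition sclosed n (p : {perm 'I_n}) (I : {set 'I_n}) : Prop :=
  forall x, x \in I -> p x \in I.

Definition interval n (u v : nat) : {set 'I_n} :=
  [set x : 'I_n | (u <= x.+1 <= v)%N].

Definition section n (p : {perm 'I_n}) (u v : nat) : Prop :=
  [/\ (1 <= u)%N, (u <= v <= n)%N,
      sclosed p (interval n u v), sclosed p (interval n 1 u.-1) &
      sclosed p (interval n v.+1 n)].

Definition segment n (p : {perm 'I_n}) (u v : nat) : Prop :=
  section p u v /\
  forall u' v', section p u' v' -> interval n u' v' \subset interval n u v ->
    interval n u' v' = interval n u v.

(* Main.v *)
Require Import Defs.
From mathcomp Require Import all_boot all_order all_fingroup.
From mathcomp Require Import zify.
Set Implicit Arguments. Unset Strict Implicit. Unset Printing Implicit Defensive.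

Lemma omaxE m (a b : 'I_m) : (omax a b : nat) = maxn a b.
Proof. rewrite /omax; case: leqP => h; lia. Qed.

Lemma cdE1 n a b : a <= n -> b <= n -> ((cd n a b).1 : nat) = a.
Proof. by move=> ha hb; rewrite /cd /= inordK. Qed.
Lemma cdE2 n a b : a <= n -> b <= n -> ((cd n a b).2 : nat) = b.
Proof. by move=> ha hb; rewrite /cd /= inordK. Qed.

Lemma cd_join n a b c d : a <= n -> b <= n -> c <= n -> d <= n ->
  gjoin (cd n a b) (cd n c d) = cd n (maxn a c) (maxn b d).
Proof.
move=> ha hb hc hd; rewrite /gjoin; congr pair; apply: val_inj;
  rewrite /= omaxE /= !inordK // /=; lia.
Qed.

Definition invk n (p : {perm 'I_n}) (k : nat) := forall j : 'I_n, (j < k) = (p j < k).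

Lemma beta_inv n (p : {perm 'I_n}) k : k <= n ->
  beta p (cd n k 0) (cd n 0 k) -> invk p k.
Proof.
move=> kn H j0.
pose f (x : grid n) := (j0 < x.1) || (p j0 < x.2).
have fj x z : f (gjoin x z) = f x || f z.
  by rewrite /f /gjoin /= !omaxE !leq_max orbACA.
have fcd a b : a <= n -> b <= n -> f (cd n a b) = (j0 < a) || (p j0 < b).
  by move=> ha hb; rewrite /f cdE1 // cdE2.
suff : f (cd n k 0) = f (cd n 0 k) by rewrite !fcd // ?ltn0 ?orbF.
apply: (H (fun x y => f x = f y)).
  split; first by [].
  - by move=> x y; apply: esym.
  - by move=> x y z; apply: etrans.
  by move=> x y z e; rewrite !fj e.
move=> j a b.
have hj : j <= n by apply: ltnW.
have hpj : p j <= n by apply: ltnW.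
have hj0 : j0 <= n by apply: ltnW.
have hpj0 : p j0 <= n by apply: ltnW.
suff hv : forall c, c \in triple p j -> f c = (j0 < j.+1) || (p j0 < (p j).+1).
  by move=> /hv -> /hv ->.
have k1 : j != j0 -> (j0 < j.+1) = (j0 < j).
  move=> ne; rewrite ltnS leq_eqVlt.
  by have -> : ((j0:nat) == j) = false by apply/negbTE; rewrite eq_sym.
have k2 : j != j0 -> (p j0 < (p j).+1) = (p j0 < p j).
  move=> ne; rewrite ltnS leq_eqVlt.
  have -> // : ((p j0:nat) == p j) = false.
  by apply/negbTE; rewrite (inj_eq val_inj) (inj_eq perm_inj) eq_sym.
move=> c; rewrite !inE => /or3P [] /eqP ->; rewrite fcd //;
  case: (eqVneq j j0) => [->|ne]; rewrite ?ltnSn ?orbT ?(k1 ne) ?(k2 ne) //.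
Qed.

Lemma section_inv n (p : {perm 'I_n}) u v : section p u v -> invk p u.-1 /\ invk p v.
Proof.
case=> h1 /andP[h2 h2'] h3 h4 h5; split=> x;
move: (h3 x) (h4 x) (h5 x) (ltn_ord x) (ltn_ord (p x)); rewrite !inE; lia.
Qed.

Lemma inv_section n (p : {perm 'I_n}) u v : 1 <= u -> u <= v <= n ->
  invk p u.-1 -> invk p v -> section p u v.
Proof.
move=> h1 h2 i1 i2; split=> // x; move: (i1 x) (i2 x) (ltn_ord x) (ltn_ord (p x));
rewrite !inE; lia.
Qed.

Lemma inv_beta n (p : {perm 'I_n}) k : k <= n -> invk p k ->
  beta p (cd n k 0) (cd n 0 k).
Proof.
move=> kn ik R [Rr Rs Rt Rc] HT.
have T1 (j : 'I_n) : R (cd n j (p j).+1) (cd n j.+1 (p j).+1).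
  by apply: (HT j); rewrite /triple !inE eqxx ?orbT.
have T2 (j : 'I_n) : R (cd n j.+1 (p j)) (cd n j.+1 (p j).+1).
  by apply: (HT j); rewrite /triple !inE eqxx ?orbT.
have A (j : 'I_n) : j < k -> R (cd n j k) (cd n j.+1 k).
  move=> jk; have pk : p j < k by rewrite -ik.
  have := Rc _ _ (cd n 0 k) (T1 j).
  rewrite !cd_join //; try lia.
  by have -> : maxn (p j).+1 k = k by lia.
have B (j : 'I_n) : j < k -> R (cd n k (p j)) (cd n k (p j).+1).
  move=> jk; have pk : p j < k by rewrite -ik.
  have := Rc _ _ (cd n k 0) (T2 j).
  rewrite !cd_join //; try lia.
  by have -> : maxn j.+1 k = k by lia.
have A' i : i <= k -> R (cd n 0 k) (cd n i k).
  elim: i => [|i IH] hi; first exact: Rr.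
  apply: Rt (IH (ltnW hi)) _.
  have hin : i < n by lia.
  exact: (A (Ordinal hin)).
have B' i : i <= k -> R (cd n k 0) (cd n k i).
  elim: i => [|i IH] hi; first exact: Rr.
  apply: Rt (IH (ltnW hi)) _.
  have hin : i < n by lia.
  pose j := (p^-1 (Ordinal hin))%g.
  have pj : p j = Ordinal hin by rewrite /j permKV.
  have jk : j < k by rewrite ik pj.
  by have := B j jk; rewrite pj.
apply: Rt (B' k (leqnn k)) _; apply: Rs; exact: A'.
Qed.

Theorem lemma4p3 (n : nat) (p : {perm 'I_n}) (k : nat) :
  (1 <= k <= n)%N ->
  (beta p (cd n k 0) (cd n 0 k) <->
   exists u : nat, segment p u k /\ (u <= k)%N).
Proof.
move=> /andP[k1 kn]; split; last first.
  by move=> [u [[hs _] _]]; have [_ ik] := section_inv hs; exact: inv_beta.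
move=> /(beta_inv kn) ik.
pose P i := (i < k) && [forall j : 'I_n, (j < i) == (p j < i)].
have exP : exists i, P i.
  by exists 0; rewrite /P k1; apply/forallP => j; rewrite !ltn0.
have ubP : forall i, P i -> i <= k by move=> i /andP[/ltnW].
case: (ex_maxnP exP ubP) => m /andP[mk /forallP im] maxm.
have imk : invk p m by move=> j; exact: (eqP (im j)).
exists m.+1; split; last lia.
split; first by apply: inv_section => //; rewrite ?mk.
move=> u' v' hs sub.
have [iu iv] := section_inv hs.
case: hs => hu1 /andP[huv hvn] _ _ _.
have hx : u'.-1 < n by lia.
have hy : v'.-1 < n by lia.
have := subsetP sub (Ordinal hx); have := subsetP sub (Ordinal hy).
rewrite !inE /= => /(_ _)/andP [] ; first lia. move=> _ hvk /(_ _)/andP []; first lia.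
move=> hmu _.
have hu : u'.-1 <= m.
  apply: maxm; rewrite /P; apply/andP; split; first lia.
  by apply/forallP => j; rewrite iu.
have hv : v' = k.
  case: (ltngtP v' k) => vk; [|lia|done].
  have : v' <= m.
    apply: maxm; rewrite /P vk; apply/forallP => j; by rewrite iv.
  lia.
have -> : u' = m.+1 by lia.
by rewrite hv.
Qed.
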